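(* Let $b\in\mathcal B$ and let $R$ be the multiset of zeros in $\mathbb C^*$ of the Laurent polynomial $1-bb^*$. Then: (a) $\pi_2^{-1}(b)\subseteq\mathcal S$ is finite and $|\pi_2^{-1}(b)|=\mathcal N(R)$; (b) if $(a,b),(a',b)\in\pi_2^{-1}(b)$, then $a\ne a'$ if and only if the multisets of zeros of $a^*$ and $(a')^*$ differ; moreover $a$ and $a'$ have the same zeros on $\mathbb T$ counted with multiplicity; (c) if $a$ is a polynomial with $a(0)\ne0$ and zero multiset $R_a$, then $(a^*,b)\in\pi_2^{-1}(b)$ implies $R=\bigcup_{\alpha\in R_a}\{\alpha,1/\overline\alpha\}$ as multisets; conversely, if $R=\bigcup_{\alpha\in R_a}\{\alpha,1/\overline\alpha\}$ then there is a unique $\lambda\in\mathbb C^*$ with $(\lambda a^*,b)\in\pi_2^{-1}(b)$.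
   Context: $\mathbb T$ is the unit circle, $\mathbb C^*=\mathbb C\setminus\{0\}$, $a^*(z):=\overline{a(1/\overline z)}$ for a Laurent polynomial $a$. $\mathcal S$ is the set of pairs $(a,b)$ of Laurent polynomials with $aa^*+bb^*=1$ and $0<a^*(0)<\infty$; $\pi_1(a,b)=a$, $\pi_2(a,b)=b$, $\mathcal A:=\pi_1(\mathcal S)$, $\mathcal B:=\pi_2(\mathcal S)$. Multiset unions add multiplicities. Counting function: for a finite multiset $R\subset\mathbb C^*$, define $\alpha\sim\beta$ iff $\alpha=\beta$ or $\alpha=1/\overline\beta$ (equivalence classes taken as multisets, all of even size in the cases considered); for a class $y$ let $\sharp(y):=1$ if $y$ meets $\mathbb T$ and $\sharp(y):=1+|y|/2$ otherwise; $\mathcal N(R):=\prod_{y\in R/\sim}\sharp(y)$. *)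

(* Defs.v *)
From HB Require Import structures.
From mathcomp Require Import all_boot all_order all_algebra.
From mathcomp Require Import finmap.
From mathcomp Require Import complex.
From mathcomp Require Import reals.
Set Implicit Arguments. Unset Strict Implicit. Unset Printing Implicit Defensive.
Import Order.TTheory GRing.Theory Num.Theory.
Local Open Scope ring_scope.


Section Laurent.
Variable R : realType.
Notation C := R[i].

Definition laurent := {fsfun int -> C with 0}.

Definition ladd (f g : laurent) : laurent :=
  [fsfun n in (finsupp f `|` finsupp g)%fset => f n + g n].
Definition lsub (f g : laurent) : laurent :=
  [fsfun n in (finsupp f `|` finsupp g)%fset => f n - g n].
Definition lmul (f g : laurent) : laurent :=
  [fsfun n in [fset (i + j)%R | i in finsupp f, j in finsupp g]%fset =>
     \sum_(i <- finsupp f) f i * g (n - i)].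
Definition lstar (f : laurent) : laurent :=
  [fsfun n in [fset (- i)%R | i in finsupp f]%fset => (f (- n))^*].
Definition lone : laurent := [fsfun n in [fset (0 : int)]%fset => 1].
Definition lscale (c : C) (f : laurent) : laurent :=
  [fsfun n in finsupp f => c * f n].
Definition lpoly (p : {poly C}) : laurent :=
  [fsfun n in [fset (k%:Z) | k in iota 0 (size p)]%fset => p`_(absz n)].

(** The multiset (as a sequence, repetitions = multiplicity) of roots of a
    polynomial over the algebraically closed field C; meaningful for p != 0. *)
Definition rootseq (p : {poly C}) : seq C := sval (closed_field_poly_normal p).

(** z^N f(z) as a polynomial, with N := sum of |n| over the support of f
    (so that z^N f(z) has no negative powers). *)
Definition lbound (f : laurent) : nat := \sum_(i <- finsupp f) absz i.
Definition lshiftpoly (f : laurent) : {poly C} :=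
  \poly_(k < (lbound f).*2.+1) f (k%:Z - (lbound f)%:Z).

Definition lzeros (f : laurent) : seq C :=
  [seq x <- rootseq (lshiftpoly f) | x != 0].

(** The set S and the set B. "0 < a^*(0) < oo": a^* has no negative powers
    and its constant coefficient is a positive real. *)
Definition inS (p : laurent * laurent) : Prop :=
  let: (a, b) := p in
  [/\ ladd (lmul a (lstar a)) (lmul b (lstar b)) = lone,
      (forall n : int, n < 0 -> lstar a n = 0) & 0 < lstar a 0].
Definition inB (b : laurent) : Prop := exists a, inS (a, b).

Definition reflT (x : C) : C := (x^*)^-1.
Definition eqcls (Rs : seq C) (x : C) : seq C :=
  [seq y <- Rs | (y == x) || (y == reflT x)].
Definition sharp (y : seq C) : nat :=
  if has (fun x => `|x| == 1) y then 1%N else (1 + (size y)./2)%N.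
Definition Ncount (Rs : seq C) : nat :=
  \prod_(y <- undup [seq eqcls Rs x | x <- Rs]) sharp y.

Definition symm_union (Rs : seq C) : seq C :=
  flatten [seq [:: x; reflT x] | x <- Rs].
End Laurent.

(* Main.v *)
Require Import Defs.
From HB Require Import structures.
From mathcomp Require Import all_boot all_order all_algebra.
From mathcomp Require Import finmap complex reals.
From mathcomp Require Import zify ring lra.
Import Order.TTheory GRing.Theory Num.Theory.
Local Open Scope ring_scope.
Set Implicit Arguments. Unset Strict Implicit. Unset Printing Implicit Defensive.

Section L.
Variable R : realType.
Local Notation C := R[i].
Local Notation laurent := (laurent R).
Implicit Types (f g h : laurent) (z : C) (p q : {poly C}).
Local Notation rf := (@reflT R).

Lemma ladd_apply f g n : ladd f g n = f n + g n.
Proof.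
rewrite /ladd fsfun_fun in_fsetU; case: ifP => //.
by move/negbT; rewrite negb_or => /andP[h1 h2]; rewrite !fsfun_dflt // addr0.
Qed.

Lemma lsub_apply f g n : lsub f g n = f n - g n.
Proof.
rewrite /lsub fsfun_fun in_fsetU; case: ifP => //.
by move/negbT; rewrite negb_or => /andP[h1 h2]; rewrite !fsfun_dflt // subr0.
Qed.

Lemma lmul_apply f g n : lmul f g n = \sum_(i <- finsupp f) f i * g (n - i).
Proof.
rewrite /lmul fsfun_fun; case: ifP => // /negbT H.
rewrite big_seq big1 // => i Hi.
case: (finsuppP g (n - i)) => [_|Hg]; first by rewrite mulr0.
case/negP: H; apply/imfset2P; exists i => //; exists (n - i) => //.
by rewrite addrC subrK.
Qed.

Lemma lstar_apply f n : lstar f n = (f (- n))^*.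
Proof.
rewrite /lstar fsfun_fun; case: ifP => // /negbT H.
case: (finsuppP f (- n)) => [_|Hf]; first by rewrite conjC0.
case/negP: H; apply/imfsetP; exists (- n) => //; by rewrite opprK.
Qed.

Lemma lone_apply n : lone R n = (n == 0)%:R.
Proof. by rewrite /lone fsfun_fun inE; case: (n == 0). Qed.

Lemma lscale_apply c f n : lscale c f n = c * f n.
Proof.
rewrite /lscale fsfun_fun; case: ifP => // /negbT H.
by rewrite fsfun_dflt // mulr0.
Qed.

Lemma lpoly_apply (p : {poly C}) n : lpoly p n = if (0 <= n) then p`_(absz n) else 0.
Proof.
rewrite /lpoly fsfun_fun; case: ifP => [/imfsetP [k /=]|/negbT H].
  by rewrite mem_iota /= => _ ->.
case: n H => [k|k] //= H.
apply/esym/eqP; apply: contraR H => H; apply/imfsetP; exists k => //=.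
rewrite mem_iota /= add0n; apply: contraR H; rewrite -leqNgt => H.
by rewrite nth_default.
Qed.


Definition lev f z := \sum_(i <- finsupp f) f i * z ^ i.

Lemma lev_super f z (s : seq int) : uniq s -> {subset finsupp f <= s} ->
  lev f z = \sum_(i <- s) f i * z ^ i.
Proof.
move=> us sub; rewrite (bigID (mem (finsupp f))) /= [X in _ + X]big1 ?addr0.
  rewrite -big_filter; apply: perm_big; apply: uniq_perm.
  - exact: fset_uniq.
  - exact: filter_uniq.
  by move=> i; rewrite mem_filter /=; case H: (i \in finsupp f) => //=; rewrite sub.
by move=> i /negbTE H; rewrite fsfun_dflt ?H // mul0r.
Qed.

Lemma lev_add f g z : lev (ladd f g) z = lev f z + lev g z.
Proof.
set K := (finsupp (ladd f g) `|` finsupp f `|` finsupp g)%fset.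
rewrite (@lev_super (ladd f g) z K (fset_uniq _)); last by move=> i Hi; rewrite !in_fsetU Hi ?orbT.
rewrite (@lev_super f z K (fset_uniq _)); last by move=> i Hi; rewrite !in_fsetU Hi ?orbT.
rewrite (@lev_super g z K (fset_uniq _)); last by move=> i Hi; rewrite !in_fsetU Hi ?orbT.
rewrite -big_split /=.
by apply: eq_bigr => i _; rewrite ladd_apply mulrDl.
Qed.

Lemma lev_sub f g z : lev (lsub f g) z = lev f z - lev g z.
Proof.
set K := (finsupp (lsub f g) `|` finsupp f `|` finsupp g)%fset.
rewrite (@lev_super (lsub f g) z K (fset_uniq _)); last by move=> i Hi; rewrite !in_fsetU Hi ?orbT.
rewrite (@lev_super f z K (fset_uniq _)); last by move=> i Hi; rewrite !in_fsetU Hi ?orbT.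
rewrite (@lev_super g z K (fset_uniq _)); last by move=> i Hi; rewrite !in_fsetU Hi ?orbT.
rewrite -sumrB /=.
by apply: eq_bigr => i _; rewrite lsub_apply mulrBl.
Qed.

Lemma lev_scale c f z : lev (lscale c f) z = c * lev f z.
Proof.
set K := (finsupp (lscale c f) `|` finsupp f)%fset.
rewrite (@lev_super (lscale c f) z K (fset_uniq _)); last by move=> i Hi; rewrite !in_fsetU Hi ?orbT.
rewrite (@lev_super f z K (fset_uniq _)); last by move=> i Hi; rewrite !in_fsetU Hi ?orbT.
by rewrite mulr_sumr; apply: eq_bigr => i _; rewrite lscale_apply mulrA.
Qed.

Lemma lev_one z : lev (lone R) z = 1.
Proof.
rewrite (lev_super (s := [:: 0]) _ _) //.
  by rewrite big_seq1 lone_apply eqxx expr0z mulr1.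
by move=> i; rewrite mem_finsupp lone_apply inE; case: (i == 0); rewrite ?eqxx.
Qed.

Lemma lev_poly (p : {poly C}) z : lev (lpoly p) z = p.[z].
Proof.
rewrite (lev_super (s := [seq Posz k | k <- iota 0 (size p)]) _ _).
- rewrite big_map horner_coef -(big_mkord xpredT (fun i => p`_i * z ^+ i)) /index_iota subn0.
  by apply: eq_bigr => i _; rewrite lpoly_apply /=.
- by rewrite map_inj_uniq ?iota_uniq // => x y [].
move=> i; rewrite mem_finsupp lpoly_apply; case: i => [k|k] //= H.
apply/mapP; exists k => //; rewrite mem_iota /= add0n ltnNge.
by apply: contra H => H; rewrite nth_default.
by rewrite eqxx in H.
Qed.


Lemma lev_mul f g z : z != 0 -> lev (lmul f g) z = lev f z * lev g z.
Proof.
move=> z0; have zu : z \is a GRing.unit by rewrite unitfE.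
set K := (finsupp (lmul f g) `|` [fset (i + j)%R | i in finsupp f, j in finsupp g])%fset.
rewrite (@lev_super (lmul f g) z K (fset_uniq _)); last by move=> i Hi; rewrite in_fsetU Hi.
under eq_bigr => n _ do rewrite lmul_apply mulr_suml.
rewrite exchange_big /= /lev mulr_suml; apply: eq_big_seq => i Hi.
under eq_bigr => n _ do rewrite -mulrA.
rewrite -!mulr_sumr -mulrA; congr (_ * _).
have -> : \sum_(n <- K) g (n - i) * z ^ n = z ^ i * \sum_(n <- K) g (n - i) * z ^ (n - i).
  rewrite mulr_sumr; apply: eq_bigr => n _.
  by rewrite mulrCA -exprzDr // subrKC.
congr (_ * _).
rewrite -(big_map (fun n => n - i) xpredT (fun m => g m * z ^ m)).
rewrite -(@lev_super g z) //.
  rewrite map_inj_uniq ?fset_uniq // => x y /eqP; rewrite subr_eq subrK => /eqP //.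
move=> j Hj; apply/mapP; exists (i + j); last by rewrite addrC addKr.
by rewrite in_fsetU; apply/orP; right; apply/imfset2P; exists i => //; exists j.
Qed.

Lemma conjXz (w : C) (n : int) : (w ^ n)^* = (w^*) ^ n.
Proof.
case: n => k; first by rewrite rmorphXn.
by rewrite !NegzE -!exprnN fmorphV rmorphXn.
Qed.

Lemma lev_star f z : z != 0 -> lev (lstar f) z = (lev f (reflT z))^*.
Proof.
move=> z0; have zu : z \is a GRing.unit by rewrite unitfE.
rewrite (@lev_super (lstar f) z [seq - i | i <- finsupp f]).
- rewrite big_map /lev rmorph_sum; apply: eq_bigr => i _.
  by rewrite lstar_apply opprK rmorphM /= conjXz /reflT fmorphV /= conjCK exprz_inv.
- by rewrite (map_inj_uniq oppr_inj); exact: fset_uniq.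
move=> n; rewrite mem_finsupp lstar_apply => H; apply/mapP; exists (- n); last by rewrite opprK.
by rewrite mem_finsupp; apply: contra H => /eqP ->; rewrite conjC0.
Qed.


Lemma test_lia (i : int) (N : nat) : (absz i <= N)%N -> 0 <= i + N%:Z /\ (absz (i + N%:Z)%R < N.*2.+1)%N.
Proof. move=> H; split; lia. Qed.

Lemma poly_eq_nz (p q : {poly C}) : (forall z, z != 0 -> p.[z] = q.[z]) -> p = q.
Proof.
move=> H; apply/eqP; rewrite -subr_eq0; apply/negPn/negP => Hd.
set d := p - q in Hd.
set rs := [seq (k.+1)%:R | k <- iota 0 (size d)] : seq C.
have H1 : all (root d) rs.
  apply/allP => x /mapP [k _ ->]; rewrite /root /d hornerD hornerN H ?subrr //.
  by rewrite pnatr_eq0.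
have H2 : uniq rs.
  by rewrite map_inj_uniq ?iota_uniq // => x y /eqP; rewrite eqr_nat => /eqP [].
by have := max_poly_roots Hd H1 H2; rewrite size_map size_iota ltnn.
Qed.

Lemma mem_lbound f i : i \in finsupp f -> (absz i <= lbound f)%N.
Proof. by move=> Hi; rewrite /lbound (big_rem i Hi) /= leq_addr. Qed.

Lemma lshift_horner f z : z != 0 -> (lshiftpoly f).[z] = z ^+ lbound f * lev f z.
Proof.
move=> z0; have zu : z \is a GRing.unit by rewrite unitfE.
set N := lbound f.
rewrite /lshiftpoly horner_poly -/N.
rewrite (@lev_super f z [seq k%:Z - N%:Z | k <- iota 0 N.*2.+1]).
- rewrite big_map mulr_sumr -(big_mkord xpredT (fun k => f (k%:Z - N%:Z) * z ^+ k)).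
  rewrite /index_iota subn0; apply: eq_bigr => k _.
  rewrite mulrCA; congr (_ * _).
  by rewrite -[z ^+ N]/(z ^ (N%:Z)) -[z ^+ k]/(z ^ (k%:Z)) -exprzDr // subrKC.
- have inj : injective (fun k : nat => k%:Z - N%:Z) by move=> x y /addIr [].
  by rewrite (map_inj_uniq inj) iota_uniq.
move=> i Hi; have := mem_lbound Hi; rewrite -/N => HN.
apply/mapP; exists (absz (i + N%:Z)).
  rewrite mem_iota add0n /=; lia.
rewrite gez0_abs; [by rewrite addrK | lia].
Qed.


Lemma lev_eq0 h : (forall z, z != 0 -> lev h z = 0) -> forall n, h n = 0.
Proof.
move=> H n; case: (finsuppP h n) => // Hn.
set N := lbound h.
have Q0 : lshiftpoly h = 0.
  by apply: poly_eq_nz => z z0; rewrite lshift_horner // H // mulr0 horner0.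
have := mem_lbound Hn; rewrite -/N => HN.
have : (lshiftpoly h)`_(absz (n + N%:Z)) = h n.
  rewrite /lshiftpoly coef_poly -/N ifT; last by lia.
  by rewrite gez0_abs ?addrK //; lia.
by rewrite Q0 coef0 => <-.
Qed.

Lemma lev_inj f g : (forall z, z != 0 -> lev f z = lev g z) -> f = g.
Proof.
move=> H; apply/fsfunP => n; apply/eqP; rewrite -subr_eq0 -lsub_apply; apply/eqP.
by apply: lev_eq0 => z z0; rewrite lev_sub H // subrr.
Qed.


Lemma rootseqE (p : {poly C}) : p = lead_coef p *: \prod_(z <- rootseq p) ('X - z%:P).
Proof. by rewrite /rootseq; case: closed_field_poly_normal. Qed.

Lemma mup_scale (c : C) (q : {poly C}) x : c != 0 -> mup x (c *: q) = mup x q.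
Proof. by move=> c0; rewrite -mul_polyC mupMr // rootC. Qed.

Lemma rootseq_count (p : {poly C}) x : p != 0 -> count_mem x (rootseq p) = mup x p.
Proof.
move=> p0; rewrite [in RHS](rootseqE p) mup_scale ?lead_coef_eq0 //.
by rewrite mu_prod_XsubC.
Qed.

Lemma ptrans (T0 : eqType) (s t u : seq T0) : perm_eq s t -> perm_eq t u -> perm_eq s u.
Proof. by move=> H1 H2; apply: perm_trans H1 H2. Qed.

Lemma psym (T0 : eqType) (s t : seq T0) : perm_eq s t -> perm_eq t s.
Proof. by rewrite perm_sym. Qed.

Lemma perm_countP (s t : seq C) : (forall x, count_mem x s = count_mem x t) -> perm_eq s t.
Proof. by move=> H; apply/allP => x _ /=; rewrite H. Qed.

Lemma perm_count (s t : seq C) x : perm_eq s t -> count_mem x s = count_mem x t.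
Proof. by move/permP => ->. Qed.

Lemma perm_rootseq (p : {poly C}) (c : C) (s : seq C) :
  c != 0 -> p = c *: \prod_(z <- s) ('X - z%:P) -> perm_eq (rootseq p) s.
Proof.
move=> c0 pE; have p0 : p != 0.
  by rewrite pE scaler_eq0 negb_or c0 /= monic_neq0 // monic_prod_XsubC.
apply: perm_countP => x; rewrite rootseq_count // pE mup_scale //.
by rewrite mu_prod_XsubC.
Qed.

Lemma rootseq_mul (p q : {poly C}) : p != 0 -> q != 0 ->
  perm_eq (rootseq (p * q)) (rootseq p ++ rootseq q).
Proof.
move=> p0 q0; apply: perm_countP => x.
by rewrite count_cat !rootseq_count ?mulf_neq0 // mupM.
Qed.

Lemma size_rootseq (p : {poly C}) : p != 0 -> size (rootseq p) = (size p).-1.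
Proof.
move=> p0; rewrite [in RHS](rootseqE p) size_scale ?lead_coef_eq0 //.
by rewrite size_prod_XsubC.
Qed.

Lemma count_filter_nz (s : seq C) x :
  count_mem x [seq y <- s | y != 0] = if x == 0 then 0%N else count_mem x s.
Proof.
elim: s => [|y s IH] /=; first by case: ifP.
have [y0|y0] := eqVneq y 0; rewrite /= IH.
  have [x0|x0] := eqVneq x 0 => //=.
  by rewrite y0 eq_sym (negPf x0).
have [x0|x0] := eqVneq x 0 => //=.
by rewrite x0 (negPf y0).
Qed.

Lemma lzeros_char f (p : {poly C}) (k : nat) : p != 0 ->
  (forall z, z != 0 -> p.[z] = z ^+ k * lev f z) ->
  perm_eq (lzeros f) [seq x <- rootseq p | x != 0].
Proof.
move=> p0 Hp; set N := lbound f; set Q := lshiftpoly f.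
have E : 'X^N * p = 'X^k * Q.
  apply: poly_eq_nz => z z0; rewrite !hornerM !hornerXn Hp // lshift_horner //.
  by rewrite -/N mulrCA.
have Q0 : Q != 0.
  have : 'X^k * Q != 0 by rewrite -E mulf_neq0 // monic_neq0 // monicXn.
  by apply: contraNneq => ->; rewrite mulr0.
apply: perm_countP => x; rewrite /lzeros -/Q !count_filter_nz.
case: (eqVneq x 0) => // x0.
have nr n : ~~ root 'X^n x by rewrite /root hornerXn expf_neq0.
by rewrite !rootseq_count // -(mupMr _ (nr k)) -E mupMr.
Qed.


Lemma prod_const_seq (T : Type) (s : seq T) (x : C) : \prod_(i <- s) x = x ^+ size s.
Proof. by elim: s => [|y s IH]; rewrite ?big_nil ?expr0 // big_cons IH exprS. Qed.

Lemma reflTK : involutive (@reflT R).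
Proof. by move=> x; rewrite /reflT fmorphV /= conjCK invrK. Qed.

Lemma reflT_eq0 (x : C) : (reflT x == 0) = (x == 0).
Proof. by rewrite /reflT invr_eq0 conjC_eq0. Qed.

Lemma horner_rootseq (p : {poly C}) w : p.[w] = lead_coef p * \prod_(r <- rootseq p) (w - r).
Proof.
by rewrite {1}(rootseqE p) hornerZ horner_prod; congr (_ * _); apply: eq_bigr => r _; rewrite hornerXsubC.
Qed.

Lemma rootseq_nz (p : {poly C}) r : p`_0 != 0 -> r \in rootseq p -> r != 0.
Proof.
move=> p0 Hr; move: p0; rewrite -horner_coef0 horner_rootseq mulf_eq0 negb_or => /andP[_].
rewrite prodf_seq_neq0 => /allP /(_ r Hr) /=; by rewrite sub0r oppr_eq0.
Qed.

Definition ptil (p : {poly C}) : {poly C} :=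
  (p`_0)^* *: \prod_(r <- rootseq p) ('X - (reflT r)%:P).

Lemma ptil_horner (p : {poly C}) z : p`_0 != 0 -> z != 0 ->
  (ptil p).[z] = z ^+ size (rootseq p) * (p.[reflT z])^*.
Proof.
move=> p0 z0; rewrite /ptil hornerZ horner_prod -horner_coef0 !horner_rootseq.
rewrite !rmorphM !rmorph_prod /= -!mulrA [RHS]mulrCA; congr (_ * _).
rewrite -prod_const_seq -!big_split /=; apply: eq_big_seq => r Hr.
have r0 := rootseq_nz p0 Hr.
rewrite hornerXsubC /reflT !rmorphB /= fmorphV /= conjCK conjC0.
have cr0 : r^* != 0 by rewrite conjC_eq0.
field; by rewrite z0 cr0.
Qed.

Lemma ptil_neq0 (p : {poly C}) : p`_0 != 0 -> ptil p != 0.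
Proof.
move=> p0; rewrite /ptil scaler_eq0 negb_or conjC_eq0 p0 /=.
by rewrite monic_neq0 // monic_prod_XsubC.
Qed.

Lemma rootseq_ptil (p : {poly C}) : p`_0 != 0 ->
  perm_eq (rootseq (ptil p)) (map (@reflT R) (rootseq p)).
Proof.
move=> p0; apply: (@perm_rootseq _ ((p`_0)^*)); first by rewrite conjC_eq0.
by rewrite /ptil big_map.
Qed.

Lemma lstarK : involutive (@lstar R).
Proof. by move=> f; apply/fsfunP => n; rewrite !lstar_apply opprK conjCK. Qed.

Definition T (p : {poly C}) : laurent := lmul (lstar (lpoly p)) (lpoly p).

Lemma lev_T p z : z != 0 -> lev (T p) z = (p.[reflT z])^* * p.[z].
Proof. by move=> z0; rewrite /T lev_mul // lev_star // !lev_poly. Qed.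

Definition U (p : {poly C}) := ptil p * p.

Lemma U_horner p z : p`_0 != 0 -> z != 0 -> (U p).[z] = z ^+ size (rootseq p) * lev (T p) z.
Proof. by move=> p0 z0; rewrite /U hornerM ptil_horner // lev_T // mulrA. Qed.

Lemma p_neq0 (p : {poly C}) : p`_0 != 0 -> p != 0.
Proof. by apply: contraNneq => ->; rewrite coef0. Qed.

Lemma U_neq0 p : p`_0 != 0 -> U p != 0.
Proof. by move=> p0; rewrite mulf_neq0 ?ptil_neq0 ?p_neq0. Qed.

Lemma rootseq_U p : p`_0 != 0 ->
  perm_eq (rootseq (U p)) (rootseq p ++ map (@reflT R) (rootseq p)).
Proof.
move=> p0; apply: (ptrans (rootseq_mul (ptil_neq0 p0) (p_neq0 p0))).
by rewrite perm_catC perm_cat2l rootseq_ptil.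
Qed.

Lemma lzeros_T p : p`_0 != 0 ->
  perm_eq (lzeros (T p)) (rootseq p ++ map (@reflT R) (rootseq p)).
Proof.
move=> p0; apply: ptrans (lzeros_char (U_neq0 p0) (fun z (z0 : z != 0) => U_horner p0 z0)) _.
apply: perm_countP => x; rewrite count_filter_nz (perm_count _ (rootseq_U p0)).
case: (eqVneq x 0) => // ->; apply/esym/count_memPn; rewrite mem_cat negb_or.
apply/andP; split; apply/negP.
  by move=> H; have := rootseq_nz p0 H; rewrite eqxx.
by case/mapP=> r Hr /esym/eqP; rewrite reflT_eq0; apply/negP; exact: rootseq_nz p0 Hr.
Qed.


Lemma sum_pos (s : seq int) (F : int -> C) :
  (forall i, i \in s -> 0 < F i) -> s != [::] -> 0 < \sum_(i <- s) F i.
Proof.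
elim: s => [|j s IH] // H _; rewrite big_cons.
have Hj : 0 < F j by apply: H; rewrite inE eqxx.
case: (eqVneq s [::]) => [->|sn]; first by rewrite big_nil addr0.
by rewrite addr_gt0 // IH // => i Hi; apply: H; rewrite inE Hi orbT.
Qed.

Lemma lmul_star_gt0 f n : f n != 0 -> 0 < lmul (lstar f) f 0.
Proof.
move=> fn; rewrite lmul_apply; apply: sum_pos.
  move=> i Hi; rewrite lstar_apply sub0r mulrC mul_conjC_gt0.
  by move: Hi; rewrite mem_finsupp lstar_apply conjC_eq0.
apply/eqP => E; have : - n \in finsupp (lstar f).
  by rewrite mem_finsupp lstar_apply opprK conjC_eq0.
by rewrite -[_ \in _]/(- n \in enum_fset (finsupp (lstar f))) E.
Qed.

Lemma T0_gt0 p : p`_0 != 0 -> 0 < T p 0.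
Proof. by move=> p0; apply: (@lmul_star_gt0 _ 0); rewrite lpoly_apply. Qed.

Lemma T_prop p q : p`_0 != 0 -> q`_0 != 0 ->
  perm_eq (rootseq p ++ map (@reflT R) (rootseq p)) (rootseq q ++ map (@reflT R) (rootseq q)) ->
  exists2 k : C, 0 < k & T p = lscale k (T q).
Proof.
move=> p0 q0 H.
have HU : perm_eq (rootseq (U p)) (rootseq (U q)).
  apply: ptrans (rootseq_U p0) _; rewrite perm_sym; apply: ptrans (rootseq_U q0) _.
  by rewrite perm_sym.
have Up0 := U_neq0 p0; have Uq0 := U_neq0 q0.
have lq0 : lead_coef (U q) != 0 by rewrite lead_coef_eq0.
set k := lead_coef (U p) / lead_coef (U q).
have EU : U p = k *: U q.
  rewrite {1}(rootseqE (U p)) (perm_big _ HU) /= {2}(rootseqE (U q)) scalerA.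
  by rewrite /k divfK.
have Hs : size (rootseq p) = size (rootseq q).
  have := perm_size H; rewrite !size_cat !size_map; by rewrite !addnn => /double_inj.
have ET : T p = lscale k (T q).
  apply: lev_inj => z z0; rewrite lev_scale.
  have zn : z ^+ size (rootseq p) != 0 by rewrite expf_neq0.
  apply: (mulfI zn); rewrite -U_horner // EU hornerZ U_horner // Hs mulrCA.
  done.
exists k => //.
have := T0_gt0 p0; rewrite ET lscale_apply => H1.
have H2 := T0_gt0 q0.
have -> : k = (k * T q 0) / T q 0 by rewrite mulfK // gt_eqF.
by rewrite divr_gt0.
Qed.


Lemma rf_eq (x y : C) : (rf y == x) = (y == rf x).
Proof. by rewrite -{1}(reflTK x) (inj_eq (can_inj reflTK)). Qed.

Lemma count_map_rf (z : C) S : count_mem z (map rf S) = count_mem (rf z) S.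
Proof. by rewrite count_map; apply: eq_count => y /=; rewrite rf_eq. Qed.

Definition validS (Rs S : seq C) := perm_eq (S ++ map rf S) Rs.

Lemma validS_count Rs S : validS Rs S <->
  (forall z, count_mem z Rs = (count_mem z S + count_mem (rf z) S)%N).
Proof.
split => [H z|H].
  by rewrite -(perm_count z H) count_cat count_map_rf.
by apply: perm_countP => z; rewrite H count_cat count_map_rf.
Qed.

Lemma validS_mem Rs S y : validS Rs S -> y \in S -> y \in Rs.
Proof. by move=> H yS; rewrite -(perm_mem H) mem_cat yS. Qed.

Definition clsP (x : C) : pred C := fun y => (y == x) || (y == rf x).

Lemma clsP_rf x y : clsP x (rf y) = clsP x y.
Proof. by rewrite /clsP rf_eq (inj_eq (can_inj reflTK)) orbC. Qed.

Lemma clsP_sym x y : clsP x y -> clsP y =1 clsP x.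
Proof.
case/orP => /eqP -> z; rewrite /clsP //.
by rewrite reflTK orbC.
Qed.

Lemma clsP_dis x y z : ~~ clsP x y -> clsP y z -> ~~ clsP x z.
Proof. by move=> H /orP [] /eqP ->; rewrite ?clsP_rf. Qed.

Lemma validS_filter (P : pred C) Rs S : (forall y, P (rf y) = P y) ->
  validS Rs S -> validS (filter P Rs) (filter P S).
Proof.
move=> HP H; have := perm_filter P H; rewrite filter_cat filter_map.
by rewrite (@eq_filter _ (preim rf P) P) // => y /=; rewrite HP.
Qed.
Arguments validS_filter : clear implicits.

Lemma validS_join Rs Rs1 Rs2 S1 S2 : perm_eq (Rs1 ++ Rs2) Rs ->
  validS Rs1 S1 -> validS Rs2 S2 -> validS Rs (S1 ++ S2).
Proof.
move=> HR /validS_count H1 /validS_count H2; apply/validS_count => z.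
by rewrite -(perm_count z HR) !count_cat H1 H2; lia.
Qed.


Lemma eqclsE (Rs : seq C) x : eqcls Rs x = filter (clsP x) Rs.
Proof. by []. Qed.

Lemma Ncount_split (Rs : seq C) x : x \in Rs ->
  Ncount Rs = (sharp (eqcls Rs x) * Ncount (filter (predC (clsP x)) Rs))%N.
Proof.
move=> xR; set Rs2 := filter (predC (clsP x)) Rs.
have key y : y \in Rs2 -> eqcls Rs2 y = eqcls Rs y.
  rewrite mem_filter => /andP [/= Hy _].
  rewrite !eqclsE /Rs2 -filter_predI; apply: eq_filter => z /=.
  by case Hz: (clsP y z) => //=; exact: clsP_dis Hy Hz.
have xx : clsP x x by rewrite /clsP eqxx.
have Hperm : perm_eq (undup [seq eqcls Rs y | y <- Rs])
                     (eqcls Rs x :: undup [seq eqcls Rs2 y | y <- Rs2]).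
  apply: uniq_perm; first exact: undup_uniq.
    rewrite cons_uniq undup_uniq andbT mem_undup; apply/mapP => [[y Hy E]].
    have : x \in eqcls Rs x by rewrite eqclsE mem_filter xx.
    rewrite E eqclsE mem_filter => /andP [_]; rewrite /Rs2 mem_filter /= xx.
    by [].
  move=> c; rewrite inE !mem_undup; apply/idP/idP.
    case/mapP => y yR ->; case: (boolP (clsP x y)) => Hxy.
      by rewrite !eqclsE (eq_filter (clsP_sym Hxy)) eqxx.
    have yR2 : y \in Rs2 by rewrite mem_filter /= Hxy.
    by rewrite -key // map_f ?orbT.
  case/orP => [/eqP -> | /mapP [y yR2 ->]]; first by rewrite map_f.
  rewrite key // map_f //; move: yR2; rewrite mem_filter => /andP[].
  by [].
by rewrite /Ncount (perm_big _ Hperm) big_cons.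
Qed.


Lemma rf_norm1 (z : C) : `|z| = 1 -> rf z = z.
Proof.
move=> Hz; have H : z * z^* = 1 by rewrite -normCK Hz expr1n.
have z0 : z != 0 by apply/eqP => E; move: H; rewrite E mul0r => /eqP; rewrite eq_sym oner_eq0.
by rewrite /reflT -[z^*](mulKf z0) H mulr1 invrK.
Qed.

Lemma rf_fix_norm (z : C) : z != 0 -> rf z = z -> `|z| = 1.
Proof.
move=> z0 Hz; have H : z^* = z^-1 by rewrite -{2}Hz /reflT invrK.
apply/eqP; rewrite -sqrp_eq1 // normCK H divff //.
Qed.

Definition canon (L : seq (seq C)) := {in L &, forall s t, perm_eq s t -> s = t}.

Lemma count_nseq_mem (z w : C) n : count_mem z (nseq n w) = ((w == z) * n)%N.
Proof. by rewrite count_nseq. Qed.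

Lemma count_all0 (P : pred C) S z : all P S -> ~~ P z -> count_mem z S = 0%N.
Proof.
move=> /allP H Hz; apply/count_memPn; apply: contra Hz => zS; exact: H.
Qed.

Lemma count_two (x y : C) s : x != y ->
  count (fun z => (z == x) || (z == y)) s = (count_mem x s + count_mem y s)%N.
Proof.
move=> xy; elim: s => //= w s ->.
case: (eqVneq w x) => [->|wx] /=; first by rewrite (negPf xy) /=; lia.
by case: (w == y) => /=; lia.
Qed.

Lemma class_sols (Rs1 S1 : seq C) x : x != 0 -> x \in Rs1 ->
  (forall z, z \in Rs1 -> clsP x z) -> validS Rs1 S1 ->
  exists sols1 : seq (seq C), [/\ uniq sols1, canon sols1,
    (forall s, s \in sols1 -> validS Rs1 s /\ all (clsP x) s),
    (forall S, validS Rs1 S -> exists2 s, s \in sols1 & perm_eq S s) &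
    size sols1 = sharp Rs1].
Proof.
move=> x0 xR HR V1.
have allV S : validS Rs1 S -> all (clsP x) S.
  by move=> V; apply/allP => z zS; apply: HR; exact: validS_mem V zS.
have A1 := allV _ V1.
have /validS_count C1 := V1.
case: (eqVneq (rf x) x) => [Hx|Hx].
- (* on the circle *)
  have allx S : all (clsP x) S -> S = nseq (size S) x.
    move=> H; apply/all_pred1P; apply: sub_all H => z; rewrite /clsP Hx orbb.
    by [].
  have sz S : validS Rs1 S -> size S = size S1.
    move=> V; have := perm_size V; rewrite -(perm_size V1) !size_cat !size_map.
    by rewrite !addnn => /double_inj.
  exists [:: nseq (size S1) x]; split => //.
  + by move=> s t; rewrite !inE => /eqP -> /eqP ->.
  + move=> s; rewrite inE => /eqP ->; rewrite -(allx S1 A1); by split.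
  + move=> S V; exists (nseq (size S1) x); first by rewrite inE.
    by rewrite -(sz _ V) -allx ?allV.
  rewrite /sharp; case: ifP => //; move/negbT/hasPn => /(_ x xR).
  by rewrite rf_fix_norm // eqxx.
(* off the circle *)
set y := rf x.
have yx : (y == x) = false by apply/negbTE.
have xy : (x == y) = false by rewrite eq_sym.
set k1 := count_mem x S1; set k2 := count_mem y S1; set m := (k1 + k2)%N.
pose f k := nseq k x ++ nseq (m - k) y.
have cf k z : count_mem z (f k) = ((x == z) * k + (y == z) * (m - k))%N.
  by rewrite count_cat !count_nseq_mem.
have fA k : all (clsP x) (f k).
  by rewrite all_cat !all_nseq /clsP eqxx /y eqxx !orbT.
have Cm : count_mem x Rs1 = m by rewrite C1 -/y.
have Cmy : count_mem y Rs1 = m by rewrite C1 /y reflTK addnC.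
have Cz z : z != x -> z != y -> count_mem z Rs1 = 0%N.
  move=> zx zy; apply: (count_all0 (P := clsP x)); first by apply/allP.
  by rewrite /clsP negb_or zx zy.
have notcls z : z != x -> z != y -> ~~ clsP x z by move=> zx zy; rewrite /clsP negb_or zx zy.
have fV k : (k <= m)%N -> validS Rs1 (f k).
  move=> km; apply/validS_count => z.
  case: (eqVneq z x) => [->|zx].
    by rewrite Cm !cf -/y xy yx !eqxx /=; lia.
  case: (eqVneq z y) => [->|zy].
    by rewrite Cmy /y reflTK !cf -/y xy yx !eqxx /=; lia.
  rewrite Cz // (count_all0 (fA k) (notcls _ zx zy)).
  rewrite (count_all0 (fA k)) // clsP_rf; exact: notcls.
have cfx k : count_mem x (f k) = k by rewrite cf eqxx eq_sym xy; lia.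
have finj : injective f by move=> a b E; rewrite -(cfx a) -(cfx b) E.
exists [seq f k | k <- iota 0 m.+1]; split.
- by rewrite map_inj_uniq ?iota_uniq.
- move=> s t /mapP [a _ ->] /mapP [b _ ->] /(perm_count x).
  by rewrite !cfx => ->.
- move=> s /mapP [k]; rewrite mem_iota add0n => /andP [_ km] ->; split => //.
  by apply: fV; rewrite -ltnS.
- move=> S V; have AS := allV _ V.
  have /validS_count CS := V.
  set k := count_mem x S.
  have HS : (k + count_mem y S)%N = m by rewrite -Cm CS.
  exists (f k); first by apply: map_f; rewrite mem_iota add0n /=; lia.
  apply: perm_countP => z; rewrite cf.
  case: (eqVneq z x) => [->|zx]; first by rewrite yx /= -/k; lia.
  case: (eqVneq z y) => [->|zy]; first by rewrite /= mul0n add0n mul1n -HS addKn.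
  by rewrite (count_all0 AS (notcls _ zx zy)).
rewrite size_map size_iota /sharp.
have -> : has (fun z => `|z| == 1) Rs1 = false.
  apply/negbTE/hasPn => z /HR /orP [] /eqP ->.
    apply/eqP => /rf_norm1; by apply/eqP; rewrite Hx.
  apply/eqP => /rf_norm1; rewrite reflTK => E; by move: Hx; rewrite -E eqxx.
have -> : size Rs1 = (m + m)%N.
  rewrite -(perm_size V1) size_cat size_map.
  have -> : size S1 = m.
    rewrite /m /k1 /k2 -(count_predT S1).
    have -> : count predT S1 = count (clsP x) S1 by apply/eq_in_count => z /(allP A1) ->.
    rewrite /clsP -/y; apply: count_two; by rewrite xy.
  by [].
by rewrite addnn doubleK add1n.
Qed.


Lemma filt_split (P : pred C) (s1 s2 : seq C) : all P s1 -> all (predC P) s2 ->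
  filter P (s1 ++ s2) = s1 /\ filter (predC P) (s1 ++ s2) = s2.
Proof.
move=> H1 H2; rewrite !filter_cat (all_filterP H1) (all_filterP H2).
have E1 : filter P s2 = [::].
  by elim: s2 H2 => //= w s IH /andP [Hw Hs]; rewrite (negPf Hw) IH.
have E2 : filter (predC P) s1 = [::].
  by elim: s1 H1 => //= w s IH /andP [Hw Hs]; rewrite Hw IH.
by rewrite E1 E2 cats0.
Qed.

Definition SolsSpec (Rs : seq C) (sols : seq (seq C)) :=
  [/\ uniq sols, canon sols,
    (forall s, s \in sols -> validS Rs s),
    (forall S, validS Rs S -> exists2 s, s \in sols & perm_eq S s) &
    size sols = Ncount Rs].

Lemma sols_nil : SolsSpec [::] [:: [::]].
Proof.
split => //.
- by move=> s t; rewrite !inE => /eqP -> /eqP ->.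
- by move=> s; rewrite inE => /eqP ->.
- move=> S V; exists [::]; rewrite ?inE //.
  by case: S V => // w S /perm_size.
by rewrite /Ncount /= big_nil.
Qed.

Lemma comb_sols n : forall Rs S0, (size Rs <= n)%N -> 0 \notin S0 -> validS Rs S0 ->
  exists sols, SolsSpec Rs sols.
Proof.
elim: n => [|n IH] [|x Rs'] S0 //= Hn S00 V; try by exists [:: [::]]; exact: sols_nil.
set Rs := x :: Rs' in Hn V *.
have xR : x \in Rs by rewrite inE eqxx.
have x0 : x != 0.
  apply/eqP => E; have : x \in S0 ++ map rf S0 by rewrite (perm_mem V).
  rewrite mem_cat E => /orP [H|/mapP [w Hw /esym/eqP]].
    by move: S00; rewrite H.
  rewrite reflT_eq0 => /eqP w0; by move: S00; rewrite -w0 Hw.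
set P := clsP x.
have HP y : P (rf y) = P y by exact: clsP_rf.
have HPC y : (predC P) (rf y) = (predC P) y by rewrite /= HP.
set Rs1 := filter P Rs; set Rs2 := filter (predC P) Rs.
set S1 := filter P S0; set S2 := filter (predC P) S0.
have V1 : validS Rs1 S1 := validS_filter P Rs S0 HP V.
have V2 : validS Rs2 S2 := validS_filter (predC P) Rs S0 HPC V.
have xR1 : x \in Rs1 by rewrite mem_filter /P /clsP eqxx.
have HR1 z : z \in Rs1 -> P z by rewrite mem_filter => /andP [].
have [sols1 [u1 c1 v1 k1 sz1]] := class_sols x0 xR1 HR1 V1.
have szR2 : (size Rs2 <= n)%N.
  have := count_predC P Rs; rewrite /Rs2 size_filter.
  have : (0 < count P Rs)%N by rewrite -has_count; apply/hasP; exists x => //; rewrite /P /clsP eqxx.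
  have : size Rs = (size Rs').+1 by [].
  lia.
have S20 : 0 \notin S2 by rewrite mem_filter negb_and S00 orbT.
have [sols2 [u2 c2 v2 k2 sz2]] := IH Rs2 S2 szR2 S20 V2.
have A2 s : s \in sols2 -> all (predC P) s.
  move=> Hs; apply/allP => z zs; have := validS_mem (v2 s Hs) zs.
  by rewrite mem_filter => /andP [].
have A1 s : s \in sols1 -> all P s by move=> Hs; case: (v1 s Hs).
exists [seq s1 ++ s2 | s1 <- sols1, s2 <- sols2]; split.
- apply: allpairs_uniq => //.
  move=> [a b] [c d] /allpairsP [[a1 b1] [/= Ha Hb [-> ->]]].
  move=> /allpairsP [[c1' d1] [/= Hc Hd [-> ->]]] /= E.
  have [Ea Eb] := filt_split (A1 _ Ha) (A2 _ Hb).
  have [Ec Ed] := filt_split (A1 _ Hc) (A2 _ Hd).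
  have : filter P (a1 ++ b1) = filter P (c1' ++ d1) by rewrite E.
  have : filter (predC P) (a1 ++ b1) = filter (predC P) (c1' ++ d1) by rewrite E.
  by rewrite Ea Eb Ec Ed => -> ->.
- move=> s t /allpairsP [[a b] [/= Ha Hb ->]] /allpairsP [[c d] [/= Hc Hd ->]] Hp.
  have [Ea Eb] := filt_split (A1 _ Ha) (A2 _ Hb).
  have [Ec Ed] := filt_split (A1 _ Hc) (A2 _ Hd).
  have P1 := perm_filter P Hp; rewrite Ea Ec in P1.
  have P2 := perm_filter (predC P) Hp; rewrite Eb Ed in P2.
  by rewrite (c1 _ _ Ha Hc P1) (c2 _ _ Hb Hd P2).
- move=> s /allpairsP [[a b] [/= Ha Hb ->]].
  apply: (validS_join (Rs1 := Rs1) (Rs2 := Rs2)).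
  + by rewrite perm_filterC.
  + by case: (v1 a Ha).
  + exact: v2.
- move=> S VS.
  have VS1 := validS_filter P Rs S HP VS.
  have VS2 := validS_filter (predC P) Rs S HPC VS.
  have [a Ha Pa] := k1 _ VS1; have [b Hb Pb] := k2 _ VS2.
  exists (a ++ b); first exact: allpairs_f.
  by rewrite -(perm_filterC P S) perm_cat.
by rewrite size_allpairs sz1 sz2 (Ncount_split xR).
Qed.



Lemma pos_neq0 (c : C) : 0 < c -> c != 0.
Proof. by move=> H; rewrite gt_eqF. Qed.

Lemma lscaleA (c d : C) f : lscale c (lscale d f) = lscale (c * d) f.
Proof. by apply/fsfunP => n; rewrite !lscale_apply mulrA. Qed.

Lemma lscale1 f : lscale 1 f = f.
Proof. by apply/fsfunP => n; rewrite lscale_apply mul1r. Qed.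

Lemma T_scale (c : C) q : T (c *: q) = lscale (c^* * c) (T q).
Proof.
apply: lev_inj => z z0; rewrite lev_scale !lev_T // !hornerZ rmorphM /=.
by rewrite mulrACA.
Qed.

Lemma U1 p q : T p = T q -> 0 < p`_0 -> 0 < q`_0 ->
  perm_eq (rootseq p) (rootseq q) -> p = q.
Proof.
move=> ET pp qp H.
have p0 := pos_neq0 pp; have q0 := pos_neq0 qp.
have lq0 : lead_coef q != 0 by rewrite lead_coef_eq0 p_neq0.
set mu := lead_coef p / lead_coef q.
have EP : p = mu *: q.
  rewrite {1}(rootseqE p) (perm_big _ H) /= {2}(rootseqE q) scalerA.
  by rewrite /mu divfK.
have Hm : mu^* * mu = 1.
  have := T0_gt0 q0; move: ET; rewrite {1}EP T_scale => E.
  have := congr1 (fun g : laurent => g 0) E; rewrite /= lscale_apply => E2 Hq.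
  by apply: (mulIf (pos_neq0 Hq)); rewrite mul1r.
have mpos : 0 < mu.
  have : p`_0 = mu * q`_0 by rewrite {1}EP coefZ.
  move=> E; have -> : mu = p`_0 / q`_0 by rewrite E mulfK.
  by rewrite divr_gt0.
have m1 : mu = 1.
  apply/eqP; rewrite -sqrp_eq1 ?ltW // expr2; apply/eqP.
  by rewrite -{1}(geC0_conj (ltW mpos)).
by rewrite EP m1 scale1r.
Qed.

Lemma scale_exists q G (k : C) : q`_0 != 0 -> 0 < k -> T q = lscale k G ->
  exists c : C, [/\ c != 0, T (c *: q) = G & 0 < (c *: q)`_0].
Proof.
move=> q0 kp ET.
set w := q`_0 * (q`_0)^*.
have wp : 0 < w by rewrite /w mul_conjC_gt0.
set s := sqrtC (k * w).
have sp : 0 < s by rewrite /s sqrtC_gt0 mulr_gt0.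
have sc : s^* = s by rewrite geC0_conj // ltW.
have s2 : s * s = k * w by rewrite -expr2 /s sqrtCK.
have s0 := pos_neq0 sp; have k0 := pos_neq0 kp; have w0 := pos_neq0 wp.
exists ((q`_0)^* / s); split.
- by rewrite mulf_neq0 ?invr_eq0 ?conjC_eq0.
- rewrite T_scale ET lscaleA.
  have -> : ((q`_0)^* / s)^* * ((q`_0)^* / s) * k = 1.
    rewrite rmorphM /= fmorphV /= conjCK sc.
    have -> : q`_0 / s * ((q`_0)^* / s) * k = w * k / (s * s).
      by rewrite /w; field.
    by rewrite s2 [k * w]mulrC divff // mulf_neq0.
  exact: lscale1.
rewrite coefZ mulrAC -[_ * q`_0]mulrC -/w.
by rewrite divr_gt0.
Qed.

Definition Fb (b : laurent) := lsub (lone R) (lmul b (lstar b)).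

Lemma inS_eq a b : inS (a, b) <->
  [/\ lmul a (lstar a) = Fb b, (forall n : int, n < 0 -> lstar a n = 0) & 0 < lstar a 0].
Proof.
rewrite /inS; split => [[E H1 H2]|[E H1 H2]]; split => //.
  by apply/fsfunP => n; rewrite lsub_apply -E ladd_apply addrK.
by apply/fsfunP => n; rewrite ladd_apply E lsub_apply subrK.
Qed.

Definition pof (A : laurent) : {poly C} := \poly_(k < (lbound A).+1) A k%:Z.

Lemma lpoly_pof (A : laurent) : (forall n : int, n < 0 -> A n = 0) -> lpoly (pof A) = A.
Proof.
move=> H; apply/fsfunP => n; rewrite lpoly_apply.
case: n => [k|k] /=; last by rewrite H.
rewrite coef_poly; case: ifP => // /negbT; rewrite ltnS -ltnNge => Hk.
rewrite fsfun_dflt //; apply: contraL Hk => /mem_lbound /=.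
by rewrite -leqNgt.
Qed.


Lemma inS_poly p b : inS (lstar (lpoly p), b) <-> T p = Fb b /\ 0 < p`_0.
Proof.
rewrite inS_eq lstarK; split => [[E _ H]|[E H]].
  by split => //; move: H; rewrite lpoly_apply.
split => //; last by rewrite lpoly_apply.
by move=> n Hn; rewrite lpoly_apply; case: ifP => // Hn2; lia.
Qed.

Lemma inS_ex a b : inS (a, b) -> exists p, a = lstar (lpoly p) /\ (T p = Fb b /\ 0 < p`_0).
Proof.
move=> H; have [_ H1 _] := (inS_eq a b).1 H.
exists (pof (lstar a)); have E : a = lstar (lpoly (pof (lstar a))) by rewrite lpoly_pof // lstarK.
by split => //; apply/inS_poly; rewrite -E.
Qed.

Lemma filter_nz_id (s : seq C) : 0 \notin s -> perm_eq [seq x <- s | x != 0] s.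
Proof.
move=> H; apply: perm_countP => x; rewrite count_filter_nz.
case: (eqVneq x 0) => // ->; by apply/esym/count_memPn.
Qed.

Lemma rootseq_nz0 p : p`_0 != 0 -> 0 \notin rootseq p.
Proof. by move=> p0; apply/negP => /(rootseq_nz p0); rewrite eqxx. Qed.

Lemma lzeros_lpoly p : p`_0 != 0 -> perm_eq (lzeros (lpoly p)) (rootseq p).
Proof.
move=> p0; apply: ptrans (filter_nz_id (rootseq_nz0 p0)).
apply: (lzeros_char (k := 0) (p_neq0 p0)) => z z0.
by rewrite expr0 mul1r lev_poly.
Qed.

Lemma lzeros_star_lpoly p : p`_0 != 0 ->
  perm_eq (lzeros (lstar (lpoly p))) (map rf (rootseq p)).
Proof.
move=> p0; apply: ptrans (rootseq_ptil p0).
have nz : 0 \notin rootseq (ptil p).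
  rewrite (perm_mem (rootseq_ptil p0)); apply/negP => /mapP [r Hr /esym/eqP].
  by rewrite reflT_eq0 => /eqP r0; move: (rootseq_nz0 p0); rewrite -r0 Hr.
apply: ptrans (filter_nz_id nz).
apply: (lzeros_char (k := size (rootseq p)) (ptil_neq0 p0)) => z z0.
by rewrite ptil_horner // lev_star // lev_poly.
Qed.

Lemma symm_union_perm (s : seq C) : perm_eq (symm_union s) (s ++ map rf s).
Proof.
apply: perm_countP => x; elim: s => //= y s IH.
rewrite /symm_union /= in IH *; rewrite !count_cat /= in IH *; rewrite IH; lia.
Qed.

Lemma count_filter_norm (s : seq C) x :
  count_mem x [seq y <- s | `|y| == 1] = if `|x| == 1 then count_mem x s else 0%N.
Proof.
elim: s => [|y s IH] /=; first by case: ifP.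
case: (eqVneq y x) => [->|yx] /=.
  by case: ifP => H /=; rewrite IH H ?eqxx.
by case: ifP => H /=; rewrite IH ?(negPf yx) /=; case: ifP.
Qed.

Lemma all2_mem (A B : eqType) (r : A -> B -> bool) ps L (u : A) :
  all2 r ps L -> u \in ps -> exists2 s, s \in L & r u s.
Proof.
elim: ps L => [|q ps IH] [|s L] //= /andP [H1 H2]; rewrite inE => /orP [/eqP ->|H].
  by exists s; rewrite ?inE ?eqxx.
by have [t Ht Hr] := IH L H2 H; exists t; rewrite ?inE ?Ht ?orbT.
Qed.

Lemma all2_memr (A B : eqType) (r : A -> B -> bool) ps L s :
  all2 r ps L -> s \in L -> exists2 u, u \in ps & r u s.
Proof.
elim: ps L => [|q ps IH] [|t L] //= /andP [H1 H2]; rewrite inE => /orP [/eqP ->|H].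
  by exists q; rewrite ?inE ?eqxx.
by have [v Hp Hr] := IH L H2 H; exists v; rewrite ?inE ?Hp ?orbT.
Qed.

Lemma all2_size (A B : Type) (r : A -> B -> bool) ps L : all2 r ps L -> size ps = size L.
Proof. by rewrite all2E => /andP [/eqP]. Qed.

Lemma all2_uniq (A B : eqType) (r : A -> B -> bool) ps L :
  all2 r ps L -> uniq L ->
  (forall (u : A) s t, s \in L -> t \in L -> r u s -> r u t -> s = t) -> uniq ps.
Proof.
elim: ps L => [|q ps IH] [|s L] //= /andP [H1 H2] /andP [sL uL] Hc.
apply/andP; split; last first.
  by apply: (IH L) => // u s' t Hs Ht; apply: Hc; rewrite inE ?Hs ?Ht orbT.
apply/negP => qps; have [t Ht Hr] := all2_mem H2 qps.
have E : s = t by apply: (Hc q); rewrite ?inE ?eqxx ?Ht ?orbT.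
by move: sL; rewrite E Ht.
Qed.

Lemma lscale_star (c : C) p : lscale c (lstar (lpoly p)) = lstar (lpoly (c^* *: p)).
Proof.
apply/fsfunP => n; rewrite lscale_apply !lstar_apply !lpoly_apply.
by case: ifP; rewrite ?coefZ ?rmorphM /= ?conjCK ?conjC0 ?mulr0.
Qed.


Lemma rootseq_scale (c : C) q : c != 0 -> q != 0 -> perm_eq (rootseq (c *: q)) (rootseq q).
Proof.
move=> c0 q0; apply: perm_countP => x.
by rewrite !rootseq_count ?mup_scale // scaler_eq0 negb_or c0.
Qed.

Lemma exist_valid p0 (Rz S : seq C) : p0`_0 != 0 ->
  perm_eq Rz (rootseq p0 ++ map rf (rootseq p0)) -> validS Rz S ->
  exists p, [/\ T p = T p0, 0 < p`_0 & perm_eq (rootseq p) S].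
Proof.
move=> p00 HRz V.
have S0 : 0 \notin S.
  apply/negP => H; have := validS_mem V H; rewrite (perm_mem HRz) mem_cat.
  case/orP => [H1|/mapP [w Hw /esym/eqP]].
    by move: (rootseq_nz0 p00); rewrite H1.
  rewrite reflT_eq0 => /eqP w0; by move: (rootseq_nz0 p00); rewrite -w0 Hw.
set q := \prod_(x <- S) ('X - x%:P).
have Hq : perm_eq (rootseq q) S.
  by apply: (perm_rootseq (c := 1)); rewrite ?oner_neq0 ?scale1r.
have q0 : q`_0 != 0.
  rewrite -horner_coef0 horner_prod prodf_seq_neq0; apply/allP => x xS /=.
  rewrite hornerXsubC sub0r oppr_eq0; apply: contraNneq S0 => <-; exact: xS.
have Hperm : perm_eq (rootseq q ++ map rf (rootseq q)) (rootseq p0 ++ map rf (rootseq p0)).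
  apply: ptrans (perm_cat Hq (perm_map rf Hq)) _; exact: ptrans V HRz.
have [k kp Ek] := T_prop q0 p00 Hperm.
have [c [c0 Tc pc]] := scale_exists q0 kp Ek.
exists (c *: q); split => //.
apply: ptrans Hq; exact: rootseq_scale c0 (p_neq0 q0).
Qed.

Lemma build_ps p0 (Rz : seq C) (L : seq (seq C)) : p0`_0 != 0 ->
  perm_eq Rz (rootseq p0 ++ map rf (rootseq p0)) -> (forall s, s \in L -> validS Rz s) ->
  exists ps, all2 (fun p s => [&& T p == T p0, 0 < p`_0 & perm_eq (rootseq p) s]) ps L.
Proof.
move=> p00 HRz; elim: L => [|s L IH] Hv; first by exists [::].
have [p [Tp pp Hp]] := exist_valid p00 HRz (Hv s (mem_head _ _)).
have [ps Hps] : exists ps, all2 (fun p s => [&& T p == T p0, 0 < p`_0 & perm_eq (rootseq p) s]) ps L.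
  by apply: IH => t Ht; apply: Hv; rewrite inE Ht orbT.
by exists (p :: ps); rewrite /= Hps Tp eqxx pp Hp.
Qed.


Lemma main (b : laurent) :
  inB b ->
  let Rz := lzeros (lsub (lone R) (lmul b (lstar b))) in
  [/\
      exists s : seq (laurent * laurent),
        [/\ uniq s, (forall p : laurent * laurent, p \in s <-> inS p /\ p.2 = b) & size s = Ncount Rz],
      (forall a a' : laurent, inS (a, b) -> inS (a', b) ->
         (a != a' <-> ~~ perm_eq (lzeros (lstar a)) (lzeros (lstar a'))) /\
         perm_eq [seq x <- lzeros a | `|x| == 1] [seq x <- lzeros a' | `|x| == 1])
    &
      (forall a : {poly R[i]}, a`_0 != 0 ->
         (inS (lstar (lpoly a), b) -> perm_eq Rz (symm_union (rootseq a))) /\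
         (perm_eq Rz (symm_union (rootseq a)) ->
            exists! lam : R[i], lam != 0 /\ inS (lscale lam (lstar (lpoly a)), b)))].
Proof.
case=> a0 H0 Rz.
have [p0 [Ea0 [T0 p0pos]]] := inS_ex H0.
have p00 := pos_neq0 p0pos.
have ERz : Rz = lzeros (T p0) by rewrite T0.
have HRz : perm_eq Rz (rootseq p0 ++ map rf (rootseq p0)) by rewrite ERz lzeros_T.
have validP p : T p = T p0 -> 0 < p`_0 -> validS Rz (rootseq p).
  move=> Tp pp; rewrite /validS ERz -Tp perm_sym; exact: lzeros_T (pos_neq0 pp).
have inS_iff a : inS (a, b) <-> exists p, a = lstar (lpoly p) /\ (T p = T p0 /\ 0 < p`_0).
  split => [H|[p [-> [Tp pp]]]].
    by have [p [Ea [Tp pp]]] := inS_ex H; exists p; rewrite T0.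
  by apply/inS_poly; rewrite -T0.
split.
- have S0ok := rootseq_nz0 p00.
  have V0 : validS Rz (rootseq p0) by rewrite /validS perm_sym.
  have [sols [u c v k sz]] := comb_sols (leqnn (size Rz)) S0ok V0.
  have [ps Hps] := build_ps p00 HRz v.
  exists [seq (lstar (lpoly p), b) | p <- ps]; split.
  + rewrite map_inj_uniq.
      apply: (all2_uniq Hps u) => w s t Hs Ht /and3P [_ _ P1] /and3P [_ _ P2].
      by apply: c => //; apply: ptrans (psym P1) P2.
    move=> p q [] /(can_inj lstarK) E; apply: poly_eq_nz => z z0.
    by rewrite -!lev_poly E.
  + move=> [a b']; split.
      case/mapP => p Hp [-> ->]; split => //; apply/inS_iff; exists p.
      by have [s _ /and3P [/eqP ? ? _]] := all2_mem Hps Hp.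
    case => /= Hin Eb; subst b'.
    have [p [Ea [Tp pp]]] := (inS_iff a).1 Hin.
    have [s Hs Ps] := k _ (validP p Tp pp).
    have [q Hq /and3P [/eqP Tq qp Pq]] := all2_memr Hps Hs.
    have E : p = q.
      apply: U1 => //; first by rewrite Tp Tq.
      by apply: ptrans Ps (psym Pq).
    by apply/mapP; exists q => //; rewrite Ea E.
  + by rewrite size_map (all2_size Hps) sz.
- move=> a a' Ha Ha'.
  have [p [Ea [Tp pp]]] := (inS_iff a).1 Ha.
  have [p' [Ea' [Tp' pp']]] := (inS_iff a').1 Ha'.
  have Lp : perm_eq (lzeros (lstar a)) (rootseq p).
    by rewrite Ea lstarK; exact: lzeros_lpoly (pos_neq0 pp).
  have Lp' : perm_eq (lzeros (lstar a')) (rootseq p').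
    by rewrite Ea' lstarK; exact: lzeros_lpoly (pos_neq0 pp').
  split.
    split => H; apply: contra H.
      move=> HP; apply/eqP; rewrite Ea Ea'; congr (lstar (lpoly _)).
      apply: U1 => //; first by rewrite Tp Tp'.
      by apply: ptrans (psym Lp) (ptrans HP Lp').
    by move=> /eqP ->; exact: perm_refl.
  have Za : perm_eq (lzeros a) (map rf (rootseq p)).
    by rewrite Ea; exact: lzeros_star_lpoly (pos_neq0 pp).
  have Za' : perm_eq (lzeros a') (map rf (rootseq p')).
    by rewrite Ea'; exact: lzeros_star_lpoly (pos_neq0 pp').
  apply: perm_countP => x.
  rewrite (perm_count x (perm_filter (fun y => `|y| == 1) Za)).
  rewrite (perm_count x (perm_filter (fun y => `|y| == 1) Za')) !count_filter_norm.
  case: ifP => // /eqP Hx; rewrite !count_map_rf (rf_norm1 Hx).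
  have h1 := (validS_count _ _).1 (validP p Tp pp) x.
  have h2 := (validS_count _ _).1 (validP p' Tp' pp') x.
  rewrite (rf_norm1 Hx) in h1 h2; rewrite h1 !addnn in h2.
  exact: double_inj h2.
- move=> a a0n; split.
    move=> Hin; have [Ta pa] := (inS_poly a b).1 Hin.
    rewrite ERz T0 -Ta; apply: ptrans (lzeros_T a0n) _.
    by rewrite perm_sym; exact: symm_union_perm.
  move=> HP.
  have Hperm : perm_eq (rootseq a ++ map rf (rootseq a)) (rootseq p0 ++ map rf (rootseq p0)).
    apply: ptrans (psym (symm_union_perm _)) _.
    exact: ptrans (psym HP) HRz.
  have [k kp Ek] := T_prop a0n p00 Hperm.
  have [c [c0 Tc pc]] := scale_exists a0n kp Ek.
  exists c^*; split.
    split; first by rewrite conjC_eq0.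
    by rewrite lscale_star conjCK; apply/inS_poly; rewrite -T0.
  move=> mu [mu0 Hmu]; rewrite lscale_star in Hmu.
  have [Tm pm] := (inS_poly _ b).1 Hmu; rewrite -T0 in Tm.
  have E : c *: a = mu^* *: a.
    apply: U1 => //; first by rewrite Tc Tm.
    apply: ptrans (rootseq_scale c0 (p_neq0 a0n)) _.
    rewrite perm_sym; apply: rootseq_scale (p_neq0 a0n).
    by rewrite conjC_eq0.
  have : c * a`_0 = mu^* * a`_0 by rewrite -!coefZ E.
  by move/(mulIf a0n) => ->; rewrite conjCK.
Qed.

End L.

Unset Implicit Arguments.

Theorem lemmaA2 (R : realType) (b : laurent R) :
  inB b ->
  let Rz := lzeros (lsub (lone R) (lmul b (lstar b))) in
  [/\ (* (a) *)
      exists s : seq (laurent R * laurent R),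
        [/\ uniq s, (forall p, p \in s <-> inS p /\ p.2 = b) & size s = Ncount Rz],
      (* (b) *)
      (forall a a' : laurent R, inS (a, b) -> inS (a', b) ->
         (a != a' <-> ~~ perm_eq (lzeros (lstar a)) (lzeros (lstar a'))) /\
         perm_eq [seq x <- lzeros a | `|x| == 1] [seq x <- lzeros a' | `|x| == 1])
    & (* (c) *)
      (forall a : {poly R[i]}, a`_0 != 0 ->
         (inS (lstar (lpoly a), b) -> perm_eq Rz (symm_union (rootseq a))) /\
         (perm_eq Rz (symm_union (rootseq a)) ->
            exists! lam : R[i], lam != 0 /\ inS (lscale lam (lstar (lpoly a)), b)))].
Proof. exact: main. Qed.
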